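(* Let $R>0$, let $f\in C_0^\infty(\mathbb{R})$ with $\operatorname{supp}f\subseteq[-R,R]$, and let $g$ be a locally integrable function on $\mathbb{R}$ such that $|g|$ vanishes monotonically at infinity (i.e. $|g(x)|\to0$ as $|x|\to\infty$, with $|g|$ increasing on some half-line $(-\infty,-c]$ and decreasing on some half-line $[c,\infty)$). For $L>0$ define, for $x\in[-L/2,L/2]$, $$h(x):=(f*_Lg-f*_\infty g)(x).$$ Then, with $M:=R\max|f|$, for all sufficiently large $L$: $$h(x)\ \begin{cases}\le M\big(|g(-L/2)|+|g(L/2-R)|\big) & \text{for } x\in[-L/2,-L/2+R),\\ =0 & \text{for } x\in[-L/2+R,\,L/2-R],\\ \le M\big(|g(L/2)|+|g(-L/2+R)|\big) & \text{for } x\in(L/2-R,\,L/2].\end{cases}$$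
   Context: For a function $u$ on $\mathbb{R}$, its periodic restriction $u^{(L)}$ is the $L$-periodic function on $\mathbb{R}$ that coincides with $u$ on $[-L/2,L/2)$. The torus convolution is $(f*_Lg)(x):=\int_{-L/2}^{L/2}f^{(L)}(y)\,g^{(L)}(x-y)\,dy=\int_{-L/2}^{L/2}f(y)\,g^{(L)}(x-y)\,dy$, and $*_\infty$ is the ordinary convolution on $\mathbb{R}$: $(f*_\infty g)(x)=\int_{\mathbb{R}}f(y)g(x-y)\,dy$. *)

(* Defs.v *)
From HB Require Import structures.
From mathcomp Require Import all_boot all_order all_algebra.
From mathcomp Require Import all_classical all_reals all_analysis.
Set Implicit Arguments. Unset Strict Implicit. Unset Printing Implicit Defensive.
Import Order.TTheory GRing.Theory Num.Theory.
Import numFieldNormedType.Exports.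
Local Open Scope classical_set_scope.
Local Open Scope ring_scope.

Section Defs.
Variable R : realType.

(* periodic restriction u^(L): the L-periodic function agreeing with u on [-L/2, L/2) *)
Definition per_restr (L : R) (u : R -> R) (x : R) : R :=
  u (x - L * (Num.floor ((x + L / 2) / L))%:~R).

Definition torus_conv (L : R) (f g : R -> R) (x : R) : R :=
  Rintegral lebesgue_measure `[- (L / 2), L / 2]
    (fun y => per_restr L f y * per_restr L g (x - y)).

Definition line_conv (f g : R -> R) (x : R) : R :=
  Rintegral lebesgue_measure [set: R] (fun y => f y * g (x - y)).

Definition smooth (f : R -> R) : Prop :=
  forall (n : nat) (x : R), derivable (derive1n n f) x 1.

Definition supp_in (f : R -> R) (R0 : R) : Prop :=
  closure [set x | f x != 0] `<=` `[- R0, R0].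

Definition vanishes_monotonically (g : R -> R) : Prop :=
  ((fun x => `|g x|) x @[x --> +oo] --> (0 : R)) /\
  ((fun x => `|g x|) x @[x --> -oo] --> (0 : R)) /\
  exists c : R,
    (forall x y, x <= y -> y <= - c -> `|g x| <= `|g y|) /\
    (forall x y, c <= x -> x <= y -> `|g y| <= `|g x|).

Definition supnorm (f : R -> R) : R := sup (range (fun x => `|f x|)).

End Defs.

(* Main.v *)
Require Import Defs.
From HB Require Import structures.
From mathcomp Require Import all_boot all_order all_algebra.
From mathcomp Require Import all_classical all_reals all_analysis.
From mathcomp Require Import lra ring.
From mathcomp Require Import measurable_realfun.
Import Order.TTheory GRing.Theory Num.Theory.
Import numFieldNormedType.Exports.
Local Open Scope classical_set_scope.
Local Open Scope ring_scope.
Set Implicit Arguments. Unset Strict Implicit.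
Lemma smooth_cont (R : realType) (f : R -> R) : smooth f -> continuous f.
Proof.
move=> sf x; apply: differentiable_continuous; apply/derivable1_diffP.
exact: (sf 0%N x).
Qed.

Lemma f_zero (R : realType) (R0 : R) (f : R -> R) : 0 < R0 -> continuous f ->
  supp_in f R0 -> forall y, R0 <= `|y| -> f y = 0.
Proof.
move=> R0p cf sf y hy; case: (eqVneq (f y) 0) => // fy0; exfalso.
have fyp : 0 < `|f y| by rewrite normr_gt0.
have := @cvgr_dist_lt _ _ _ _ _ f (f y) (cf y) _ fyp.
move=> H; have [e e0 He] := (nbhs_ballP _ _).1 (H _).
have {}e0 : 0 < e := e0.
have inS : forall z, `|y - z| < e -> - R0 <= z <= R0.
  move=> z hz.
  have : ball y e z by rewrite /ball /=.
  move=> /He /= hz'.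
  have : `[- R0, R0]%classic z.
    apply: sf; apply: subset_closure => /=.
    by apply/eqP => fz0; move: hz'; rewrite fz0 subr0 ltxx.
  by rewrite /= in_itv /=.
have [y0|y0] := leP 0 y.
- have := inS (y + e / 2).
  have -> : y - (y + e / 2) = - (e / 2) by lra.
  rewrite normrN gtr0_norm; last lra.
  move: hy; rewrite ger0_norm // => hy.
  move=> /(_ ltac:(lra)); lra.
- have := inS (y - e / 2).
  have -> : y - (y - e / 2) = (e / 2) by lra.
  rewrite gtr0_norm; last lra.
  move: hy; rewrite ltr0_norm // => hy.
  move=> /(_ ltac:(lra)); lra.
Qed.

Lemma f_bound (R : realType) (R0 : R) (f : R -> R) : 0 < R0 -> continuous f ->
  supp_in f R0 -> forall y, `|f y| <= supnorm f.
Proof.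
move=> R0p cf sf y.
have cnf : continuous (fun y => `|f y|).
  by move=> x; apply: continuous_comp; [exact: cf | exact: norm_continuous].
have [c _ Hc] := @EVT_max R (fun y => `|f y|) (- R0) R0 ltac:(lra)
  (continuous_subspaceT cnf).
have ub : forall z, `|f z| <= `|f c|.
  move=> z; have [zin|zout] := boolP (z \in `[- R0, R0]).
    exact: Hc.
  have hz : R0 <= `|z|.
    move: zout; rewrite in_itv /= negb_and -!ltNge => /orP[] hz.
    - rewrite ltr0_norm; lra.
    - rewrite gtr0_norm; lra.
  by rewrite (@f_zero _ R0 f) // normr0.
apply: ub_le_sup; last by exists y.
by exists `|f c| => _ [z _ <-]; exact: ub.
Qed.

Lemma preim_oc (R : realType) (x a b : R) :
  (fun y : R => x - y) @^-1` `]a, b]%classic = `[x - b, x - a[%classic.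
Proof.
apply/seteqP; split => y /=; rewrite !in_itv /= => /andP[h1 h2];
  apply/andP; split; lra.
Qed.

Lemma trans_meas (R : realType) (x : R) (A : set R) : measurable A ->
  lebesgue_measure A = pushforward lebesgue_measure (fun y : R => x - y) A.
Proof.
have mphi : measurable_fun (T:=measurableTypeR R) (U:=measurableTypeR R) setT (fun y : R => x - y).
  exact: (measurable_funB (measurable_cst x) (@measurable_id _ _ setT)).
move=> mA.
have := @lebesgue_measure_unique R (@measure_function_pushforward__canonical__measure_function_Measure _ _ _ (measurableTypeR R) R lebesgue_measure _ mphi) _ A mA.
apply => X [[a b] _ <-] /=.
rewrite /pushforward preim_oc !lebesgue_measure_itv /= !lte_fin.
have -> : (x - b < x - a) = (a < b) by apply/idP/idP => ?; lra.
by case: ifP => // _; rewrite -EFinD; congr EFin; lra.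

Qed.

Lemma trans_int (R : realType) (x : R) (D : set R) (h : R -> \bar R) :
  measurable D -> measurable_fun D h -> (forall z, D z -> (0 <= h z)%E) ->
  (\int[lebesgue_measure]_(y in (fun y : R => (x - y)%R) @^-1` D) h (x - y)%R =
   \int[lebesgue_measure]_(z in D) h z)%E.
Proof.
have mphi : measurable_fun (T:=measurableTypeR R) (U:=measurableTypeR R) setT (fun y : R => x - y).
  exact: (measurable_funB (measurable_cst x) (@measurable_id _ _ setT)).
move=> mD mh h0.
rewrite -(@ge0_integral_pushforward _ _ (measurableTypeR R) (measurableTypeR R) R _ mphi lebesgue_measure D h) //; last first.
  by move=> z /[!inE]; exact: h0.
apply: (@eq_measure_integral _ (measurableTypeR R) R D lebesgue_measure
  (@measure_function_pushforward__canonical__measure_function_Measure _ _ _ (measurableTypeR R) R lebesgue_measure _ mphi)).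
move=> A mA _ /=. have := @trans_meas R x A mA. move=> ->. done.
Qed.

Lemma preim_cc (R : realType) (x a b : R) :
  (fun y : R => x - y) @^-1` `[a, b]%classic = `[x - b, x - a]%classic.
Proof.
apply/seteqP; split => y /=; rewrite !in_itv /= => /andP[h1 h2];
  apply/andP; split; lra.
Qed.

Lemma mphiT (R : realType) (x c : R) :
  measurable_fun setT (fun y : R => x - y + c).
Proof.
apply: measurable_funD; last exact: measurable_cst.
exact: (measurable_funB (measurable_cst x) (@measurable_id _ _ setT)).
Qed.

Lemma mphi0 (R : realType) (x : R) :
  measurable_fun setT (fun y : R => x - y).
Proof. exact: (measurable_funB (measurable_cst x) (@measurable_id _ _ setT)). Qed.

Lemma FL_int (R : realType) (R0 : R) (f g : R -> R) (x : R) : 0 < R0 ->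
  continuous f -> supp_in f R0 -> locally_integrable setT g ->
  lebesgue_measure.-integrable setT (EFin \o (fun y => f y * g (x - y))).
Proof.
move=> R0p cf sf [mg _ lig].
have mf : measurable_fun setT f := continuous_measurable_fun cf.
have mgx : measurable_fun setT (fun y : R => g (x - y)).
  by have := measurableT_comp mg (mphi0 x).
have mF : measurable_fun setT (fun y : R => f y * g (x - y)).
  exact: measurable_funM.
pose F := (fun y : R => f y * g (x - y)).
change (lebesgue_measure.-integrable setT (EFin \o F)).
apply/integrableP; split; first exact/measurable_EFinP.
set D := `[- R0, R0]%classic.
have mD : measurable D. rewrite /D. exact: measurable_itv.
have -> : (\int[lebesgue_measure]_(y in setT) `|(EFin \o F) y| =
    \int[lebesgue_measure]_(y in D) `|(EFin \o F) y|)%E.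
  rewrite [RHS]integral_mkcond; apply: eq_integral => y _.
  rewrite /patch; case: ifPn => // yD.
  have hy : R0 <= `|y|.
    move: yD; rewrite notin_setE /D /= in_itv /= => /negP; rewrite negb_and -!ltNge => /orP[] hz.
    - rewrite ltr0_norm; lra.
    - rewrite gtr0_norm; lra.
  by rewrite /F /= (f_zero R0p cf sf hy) mul0r normr0.
apply: (@le_lt_trans _ _ (\int[lebesgue_measure]_(y in D) ((supnorm f)%:E * `|g (x - y)%R|%:E))%E).
  apply: ge0_le_integral => //.
  - apply: measurableT_comp => //; apply/measurable_EFinP; exact: measurable_funTS.
  - apply: emeasurable_funM; first exact: measurable_cst.
    apply/measurable_EFinP; apply: measurableT_comp => //; exact: measurable_funTS.
  - move=> y _ /=; rewrite normrM EFinM; apply: lee_wpmul2r => //.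
    by rewrite lee_fin; exact: (f_bound R0p cf sf).
rewrite ge0_integralZl //; last 2 first.
  - apply/measurable_EFinP; apply: measurableT_comp => //; exact: measurable_funTS.
  - by rewrite lee_fin (le_trans _ (f_bound R0p cf sf 0)).
have -> : D = (fun y : R => x - y) @^-1` `[x - R0, x + R0]%classic.
  have e1 : x - (x + R0) = - R0 by lra.
  have e2 : x - (x - R0) = R0 by lra.
  by rewrite preim_cc e1 e2.
rewrite (@trans_int R x `[x - R0, x + R0]%classic (fun z => `|g z|%:E)) //; last first.
  - apply/measurable_EFinP; apply: measurableT_comp => //; exact: measurable_funTS.
have := lig `[x - R0, x + R0]%classic (fun _ _ => I) (@segment_compact R (x - R0) (x + R0)).
move=> hI.
have Ifin : (\int[lebesgue_measure]_(z in `[(x - R0)%R, (x + R0)%R]) `|g z|%:E)%E \is a fin_num.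
  by rewrite ge0_fin_numE // integral_ge0.
by rewrite -(fineK Ifin) -EFinM ltry.
Qed.

Lemma key_bound (R : realType) (F k : R -> R) (A : set R) (C r : R) :
  lebesgue_measure.-integrable setT (EFin \o F) -> measurable_fun setT k ->
  measurable A -> (lebesgue_measure A <= r%:E)%E -> 0 <= C ->
  (forall y, `|k y| <= C * \1_A y) ->
  Rintegral lebesgue_measure setT (fun y => F y + k y) -
  Rintegral lebesgue_measure setT F <= C * r.
Proof.
move=> iF mk mA hA C0 hk.
have bnd : (\int[lebesgue_measure]_(y in setT) `|(EFin \o k) y| <= (C * r)%:E)%E.
  apply: (@le_trans _ _ (\int[lebesgue_measure]_(y in setT) (C%:E * (\1_A y)%:E))%E).
    apply: ge0_le_integral => //.
    - apply: measurableT_comp => //; exact/measurable_EFinP.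
    - apply: emeasurable_funM; first exact: measurable_cst.
      apply/measurable_EFinP; exact: measurable_indic.
    - by move=> y _ /=; rewrite -EFinM lee_fin; exact: hk.
  rewrite ge0_integralZl //; last first.
    by apply: measurableT_comp => //; exact: measurable_indic.
  rewrite integral_indic // setIT EFinM.
  by apply: lee_wpmul2l => //; rewrite lee_fin.
have ik : lebesgue_measure.-integrable setT (EFin \o k).
  apply/integrableP; split; first exact/measurable_EFinP.
  exact: (le_lt_trans bnd (ltry _)).
rewrite RintegralD //.
have -> : forall a b : R, a + b - a = b by move=> a b; lra.
rewrite /Rintegral -lee_fin fineK; last exact: integrable_fin_num.
apply: le_trans bnd.
apply: le_trans (le_abse_integral _ _ _); last exact/measurable_EFinP.
exact: lee_abs.
exact: measurableT.
Qed.

Lemma per_restr_n (R : realType) (L : R) (u : R -> R) (z : R) (n : int) :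
  0 < L -> n%:~R * L - L / 2 <= z -> z < n%:~R * L + L / 2 ->
  per_restr L u z = u (z - L * n%:~R).
Proof.
move=> L0 h1 h2; rewrite /per_restr (@Num.Theory.floor_def _ _ n) //.
rewrite intrD /= ler_pdivlMr // ltr_pdivrMr //.
apply/andP; split; lra.
Qed.

Lemma indic_itv (R : realType) (i : interval R) (y : R) :
  \1_([set` i]) y = (y \in i)%:R :> R.
Proof. by rewrite indicE mem_setE. Qed.

Lemma per_restr_0 (R : realType) (L : R) (u : R -> R) (z : R) :
  0 < L -> - (L / 2) <= z -> z < L / 2 -> per_restr L u z = u z.
Proof.
move=> L0 h1 h2; rewrite (@per_restr_n _ _ _ _ 0) //=; last 2 first.
- by rewrite mul0r; lra.
- by rewrite mul0r; lra.
by rewrite mulr0 subr0.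
Qed.

Lemma per_restr_1 (R : realType) (L : R) (u : R -> R) (z : R) :
  0 < L -> L / 2 <= z -> z < 3 * (L / 2) -> per_restr L u z = u (z - L).
Proof.
move=> L0 h1 h2; rewrite (@per_restr_n _ _ _ _ 1) //=; last 2 first.
- by rewrite mul1r; lra.
- by rewrite mul1r; lra.
by rewrite mulr1.
Qed.

Lemma per_restr_m1 (R : realType) (L : R) (u : R -> R) (z : R) :
  0 < L -> - (3 * (L / 2)) <= z -> z < - (L / 2) -> per_restr L u z = u (z + L).
Proof.
move=> L0 h1 h2; rewrite (@per_restr_n _ _ _ _ (-1)) //=; last 2 first.
- by rewrite mulN1r; lra.
- by rewrite mulN1r; lra.
by rewrite mulrN1 opprK.
Qed.

Lemma not_in_lt (R : realType) (R0 y : R) : `|y| < R0 -> - R0 < y /\ y < R0.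
Proof. by rewrite ltr_norml => /andP[]. Qed.

Lemma torus_eq (R : realType) (R0 L : R) (f g : R -> R) (x : R) :
  0 < R0 -> continuous f -> supp_in f R0 -> R0 < L / 2 ->
  torus_conv L f g x =
  Rintegral lebesgue_measure setT (fun y => f y * per_restr L g (x - y)).
Proof.
move=> R0p cf sf hL.
have L0 : 0 < L by lra.
rewrite /torus_conv Rintegral_mkcond; apply: eq_Rintegral => y _.
rewrite /patch; case: ifPn => yD.
- move: yD; rewrite mem_setE in_itv /= => /andP[y1 y2].
  have [yL|yL] := ltP y (L / 2).
    by rewrite (per_restr_0 _ L0).
  have yE : y = L / 2 by lra.
  rewrite (per_restr_1 _ L0) //; last lra.
  have hy1 : R0 <= `|y| by rewrite yE gtr0_norm; lra.
  have hy2 : R0 <= `|y - L| by rewrite yE ltr0_norm; lra.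
  by rewrite (f_zero R0p cf sf hy1) (f_zero R0p cf sf hy2) !mul0r.
- have hy : R0 <= `|y|.
    move: yD; rewrite notin_setE /= in_itv /= => /negP; rewrite negb_and -!ltNge => /orP[] hz.
    - rewrite ltr0_norm; lra.
    - rewrite gtr0_norm; lra.
  by rewrite (f_zero R0p cf sf hy) mul0r.
Qed.

Theorem lemmaA2 (R : realType) (R0 : R) (f g : R -> R) :
  0 < R0 -> smooth f -> supp_in f R0 ->
  locally_integrable [set: R] g -> vanishes_monotonically g ->
  let M := R0 * supnorm f in
  exists L0 : R, forall L : R, L0 < L ->
    let h := fun x => torus_conv L f g x - line_conv f g x in
    (forall x, - (L / 2) <= x -> x < - (L / 2) + R0 ->
        h x <= M * (`|g (- (L / 2))| + `|g (L / 2 - R0)|)) /\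
    (forall x, - (L / 2) + R0 <= x -> x <= L / 2 - R0 -> h x = 0) /\
    (forall x, L / 2 - R0 < x -> x <= L / 2 ->
        h x <= M * (`|g (L / 2)| + `|g (- (L / 2) + R0)|)).
Proof.
move=> R0p sm sf lig vm M.
have cf := smooth_cont sm.
case: vm => _ [_ [c [hl hr]]].
have [mg _ _] := lig.
have fb := f_bound R0p cf sf.
have fz := f_zero R0p cf sf.
have S0 : 0 <= supnorm f := le_trans (normr_ge0 _) (fb 0).
have mf : measurable_fun setT f := continuous_measurable_fun cf.
exists (2 * (R0 + `|c|)) => L hL h; rewrite {}/h.
have hc1 : c <= `|c| := ler_norm c.
have hc2 : - `|c| <= c by have := ler_norm (- c); rewrite normrN; lra.
have hc0 : 0 <= `|c| := normr_ge0 c.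
have L0 : 0 < L by lra.
have hRL : R0 < L / 2 by lra.
split; [|split].
- move=> x hx1 hx2.
  rewrite (@torus_eq _ R0 L f g x R0p cf sf hRL) /line_conv.
  pose k := fun y => \1_(`]x + L / 2, +oo[%classic) y * (f y * (g (x - y + L) - g (x - y))).
  have -> : Rintegral lebesgue_measure setT (fun y => f y * per_restr L g (x - y)) =
      Rintegral lebesgue_measure setT (fun y => f y * g (x - y) + k y).
    apply: eq_Rintegral => y _.
    rewrite /k indic_itv in_itv /= andbT.
    have [hy|hy] := leP R0 `|y|.
      by rewrite (fz y hy) !mul0r mulr0 addr0.
    have [y1 y2] := not_in_lt hy.
    case: (ltP (x + L / 2) y) => ay /=.
    + rewrite (per_restr_m1 _ L0); [ring | lra | lra].
    + rewrite (per_restr_0 _ L0); [by rewrite mul0r addr0 | lra | lra].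
  pose C := supnorm f * (`|g (- (L / 2))| + `|g (L / 2 - R0)|).
  have C0 : 0 <= C by apply: mulr_ge0 => //; apply: addr_ge0.
  have mk : measurable_fun setT k.
    apply: measurable_funM; first by apply: measurable_indic; exact: measurable_itv.
    apply: measurable_funM => //.
    apply: measurable_funB.
    + by have := measurableT_comp mg (mphiT x L).
    + by have := measurableT_comp mg (mphi0 x).
  pose A := (`]x + L / 2, R0]%classic : set R).
  have mA : measurable A by exact: measurable_itv.
  have hA : (lebesgue_measure A <= R0%:E)%E.
    rewrite /A.
    rewrite lebesgue_measure_itv /= lte_fin; case: ifP => _.
      by rewrite -EFinB lee_fin; lra.
    by rewrite lee_fin; lra.
  have hk : forall y, `|k y| <= C * \1_A y.
    move=> y; rewrite /k /A !indic_itv !in_itv /= andbT.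
    have [hy|hy] := leP R0 `|y|.
      rewrite (fz y hy) mul0r mulr0 normr0; apply: mulr_ge0 => //.
    have [y1 y2] := not_in_lt hy.
    case: (ltP (x + L / 2) y) => ay /=; last first.
      rewrite ?mul0r normr0; apply: mulr_ge0 => //.
    rewrite (ltW y2) /= mul1r mulr1 normrM.
    apply: ler_pM => //.
    apply: le_trans (ler_normB _ _) _.
    have g1 : `|g (x - y + L)| <= `|g (L / 2 - R0)| by apply: hr; lra.
    have g2 : `|g (x - y)| <= `|g (- (L / 2))| by apply: hl; lra.
    lra.
  have := key_bound (@FL_int _ R0 f g x R0p cf sf lig) mk mA hA C0 hk.
  suff -> : M * (`|g (- (L / 2))| + `|g (L / 2 - R0)|) = C * R0 by [].
  by rewrite /M /C; ring.
- move=> x hx1 hx2.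
  rewrite (@torus_eq _ R0 L f g x R0p cf sf hRL) /line_conv.
  apply/eqP; rewrite subr_eq0; apply/eqP.
  apply: eq_Rintegral => y _.
  have [hy|hy] := leP R0 `|y|.
    by rewrite (fz y hy) !mul0r.
  have [y1 y2] := not_in_lt hy.
  rewrite (per_restr_0 _ L0) //; lra.
- move=> x hx1 hx2.
  rewrite (@torus_eq _ R0 L f g x R0p cf sf hRL) /line_conv.
  pose k := fun y => \1_(`]-oo, x - L / 2]%classic) y * (f y * (g (x - y - L) - g (x - y))).
  have -> : Rintegral lebesgue_measure setT (fun y => f y * per_restr L g (x - y)) =
      Rintegral lebesgue_measure setT (fun y => f y * g (x - y) + k y).
    apply: eq_Rintegral => y _.
    rewrite /k indic_itv in_itv /=.
    have [hy|hy] := leP R0 `|y|.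
      by rewrite (fz y hy) !mul0r mulr0 addr0.
    have [y1 y2] := not_in_lt hy.
    case: (leP y (x - L / 2)) => ay /=.
    + rewrite (per_restr_1 _ L0); [ring | lra | lra].
    + rewrite (per_restr_0 _ L0); [by rewrite mul0r addr0 | lra | lra].
  pose C := supnorm f * (`|g (L / 2)| + `|g (- (L / 2) + R0)|).
  have C0 : 0 <= C by apply: mulr_ge0 => //; apply: addr_ge0.
  have mk : measurable_fun setT k.
    apply: measurable_funM; first by apply: measurable_indic; exact: measurable_itv.
    apply: measurable_funM => //.
    apply: measurable_funB.
    + by have := measurableT_comp mg (mphiT x (- L)).
    + by have := measurableT_comp mg (mphi0 x).
  pose A := (`[- R0, x - L / 2]%classic : set R).
  have mA : measurable A by exact: measurable_itv.
  have hA : (lebesgue_measure A <= R0%:E)%E.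
    rewrite /A.
    rewrite lebesgue_measure_itv /= lte_fin; case: ifP => _.
      by rewrite -EFinB lee_fin; lra.
    by rewrite lee_fin; lra.
  have hk : forall y, `|k y| <= C * \1_A y.
    move=> y; rewrite /k /A !indic_itv !in_itv /=.
    have [hy|hy] := leP R0 `|y|.
      rewrite (fz y hy) mul0r mulr0 normr0; apply: mulr_ge0 => //.
    have [y1 y2] := not_in_lt hy.
    case: (leP y (x - L / 2)) => ay /=; last first.
      by rewrite mul0r normr0 andbF mulr0.
    rewrite (ltW y1) /= mul1r mulr1 normrM.
    apply: ler_pM => //.
    apply: le_trans (ler_normB _ _) _.
    have g1 : `|g (x - y - L)| <= `|g (- (L / 2) + R0)| by apply: hl; lra.
    have g2 : `|g (x - y)| <= `|g (L / 2)| by apply: hr; lra.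
    lra.
  have := key_bound (@FL_int _ R0 f g x R0p cf sf lig) mk mA hA C0 hk.
  suff -> : M * (`|g (L / 2)| + `|g (- (L / 2) + R0)|) = C * R0 by [].
  by rewrite /M /C; ring.
Qed.
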